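(* Let $M,N\ge3$ be integers with $M$ divisible by $(7^{N+1})!$. Let $I_1$ be the sequence consisting of $N$ batches of $M$ identical items each, with item sizes $\frac1{7^N},\frac1{7^{N-1}},\dots,\frac17$ in this order. Let $J_3$ be $I_1$ followed by $M$ items of size $\frac13$; let $J_2$ be $J_3$ followed by $M$ items of size $\frac12$; let $J_{22}$ be $J_3$ followed by $2M$ items of size $\frac12$; and let $J_1$ be $J_2$ followed by $M$ items of size $1$. Then $\mathrm{OPT}(J_3)\le\frac{3M}8$, $\mathrm{OPT}(J_2)\le\frac{2M}3$, $\mathrm{OPT}(J_{22})\le M$ and $\mathrm{OPT}(J_1)\le M$.
   Context: Ordered Open End Bin Packing: a sequence of items with sizes in $(0,1]$ must be packed into bins in sequence order, where an item may be added to a bin only if the bin's current total size is strictly below $1$; equivalently, in each bin the total size of all items except the one appearing last in the sequence is strictly below $1$. $\mathrm{OPT}(I)$ is the minimum number of bins of such a packing of the sequence $I$. *)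

(* Defs.v *)
From mathcomp Require Import all_boot all_order all_algebra.
Set Implicit Arguments. Unset Strict Implicit. Unset Printing Implicit Defensive.
Import Order.TTheory GRing.Theory Num.Theory.
Local Open Scope ring_scope.

(* A packing of the item sequence [s] (sizes in rat) into [k] bins is an
   assignment [f] of each item (by position) to a bin.  It is valid for
   Ordered Open End Bin Packing iff in every bin, the total size of all items
   except the one appearing last in the sequence is strictly below 1, i.e. the
   sum over the items i of bin b for which some later item j of the sequence
   is also in bin b is < 1. *)
Definition oe_valid (s : seq rat) (k : nat) (f : {ffun 'I_(size s) -> 'I_k}) : bool :=
  [forall b : 'I_k,
     (\sum_(i < size s | (f i == b) && [exists j : 'I_(size s), (f j == b) && (i < j)%N])
        s`_i) < 1].

Definition oe_packable (s : seq rat) (k : nat) : bool :=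
  [exists f : {ffun 'I_(size s) -> 'I_k}, oe_valid f].

Lemma oe_packable_size (s : seq rat) : oe_packable s (size s).
Proof.
apply/existsP; exists [ffun i => i]; apply/forallP => b.
rewrite big1 ?ltr01 // => i /andP[/eqP] ; rewrite ffunE => -> /existsP[j].
by rewrite ffunE => /andP[/eqP -> ]; rewrite ltnn.
Qed.

Lemma oe_packable_ex (s : seq rat) : exists k, oe_packable s k.
Proof. by exists (size s); apply: oe_packable_size. Qed.

Definition OPT (s : seq rat) : nat := ex_minn (oe_packable_ex s).

Definition I1 (M N : nat) : seq rat :=
  flatten [seq nseq M ((7 ^+ (N - k))^-1 : rat) | k <- iota 0 N].

Definition J3 (M N : nat) : seq rat := I1 M N ++ nseq M (3^-1).
Definition J2 (M N : nat) : seq rat := J3 M N ++ nseq M (2^-1).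
Definition J22 (M N : nat) : seq rat := J3 M N ++ nseq (2 * M) (2^-1).
Definition J1 (M N : nat) : seq rat := J2 M N ++ nseq M 1.

(* Main.v *)
Require Import Defs.
From mathcomp Require Import all_boot all_order all_algebra.
From mathcomp Require Import zify ring lra.
Import Order.TTheory GRing.Theory Num.Theory.
Local Open Scope ring_scope.

Lemma OPT_le (s : seq rat) k : oe_packable s k -> (OPT s <= k)%N.
Proof. rewrite /OPT; case: ex_minnP => m _ Hmin; exact: Hmin. Qed.

Lemma crit (s : seq rat) (k : nat) (g : nat -> nat) :
  (forall x, x \in s -> 0 <= x) ->
  (forall i, (i < size s)%N -> (g i < k)%N) ->
  (forall b, (b < k)%N -> exists T, [/\ (T < size s)%N, g T = b,
     (forall j, (j < size s)%N -> g j = b -> (j <= T)%N) &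
     \sum_(0 <= i < size s) (if g i == b then s`_i else 0) - s`_T < 1]) ->
  oe_packable s k.
Proof.
move=> Hpos Hg H; apply/existsP.
exists [ffun i : 'I_(size s) => Ordinal (Hg i (ltn_ord i))]; apply/forallP => b.
have [T [HT gT Tmax Hsum]] := H b (ltn_ord b).
apply: le_lt_trans Hsum.
rewrite [X in _ <= X - _]big_mkord [X in _ <= X - _](bigD1 (Ordinal HT)) //= gT eqxx addrAC subrr add0r.
rewrite big_mkcond [X in _ <= X]big_mkcond /=.
apply: ler_sum => i _; rewrite ffunE.
case: ifP => [/andP[/eqP /(congr1 val) /= gi /existsP[j /andP[]]]|_].
  rewrite ffunE => /eqP /(congr1 val) /= gj ij.
  have := Tmax _ (ltn_ord j) gj => jT.
  have -> : i != Ordinal HT by apply/eqP => /(congr1 val) /= iT; move: ij jT; rewrite iT; lia.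
  by rewrite gi eqxx.
case: ifP => // _; case: ifP => // _; apply: Hpos; exact: mem_nth.
Qed.

Lemma nth_flat (M : nat) (vs : seq rat) i : (0 < M)%N ->
  (flatten (map (nseq M) vs))`_i = vs`_(i %/ M).
Proof.
move=> M0; elim: vs i => [|v vs IH] i /=; first by rewrite !nth_nil.
rewrite nth_cat size_nseq nth_nseq; case: ltnP => iM.
  by rewrite divn_small.
rewrite IH; have -> : i = (1 * M + (i - M))%N by rewrite mul1n subnKC.
by rewrite divnMDl // add1n /= mul1n addKn.
Qed.

Lemma size_flat (M : nat) (vs : seq rat) : size (flatten (map (nseq M) vs)) = (size vs * M)%N.
Proof. by elim: vs => //= v vs IH; rewrite size_cat size_nseq IH mulSn. Qed.

Lemma sum_split (n m : nat) (F : nat -> rat) :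
  \sum_(0 <= i < n * m) F i = \sum_(0 <= B < n) \sum_(0 <= j < m) F (B * m + j)%N.
Proof.
elim: n => [|n IH]; first by rewrite mul0n !big_geq.
rewrite mulSn addnC (big_cat_nat (n := n * m)) ?leq_addr // IH big_nat_recr //=.
congr (_ + _); rewrite -{1}[(n * m)%N]add0n big_addn addKn.
by apply: eq_bigr => j _; rewrite addnC.
Qed.

Lemma decomp {t G : nat} (B : nat) {p r : nat} : (p < t)%N -> (r < G)%N ->
  let i := (B * (t * G) + (p * G + r))%N in
  [/\ i %/ (t * G) = B, i %% (t * G) = (p * G + r)%N, (p * G + r) %/ G = p & i %% G = r]%N.
Proof.
move=> pt rG i.
have h1 : (p * G + r < t * G)%N.
  apply: (@leq_trans (p.+1 * G)); first by rewrite mulSn addnC ltn_add2r.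
  by rewrite leq_mul2r pt orbT.
have G0 : (0 < G)%N by apply: leq_ltn_trans rG.
split.
- by rewrite /i divnMDl ?divn_small ?addn0 //; apply: leq_ltn_trans h1.
- by rewrite /i modnMDl modn_small.
- by rewrite divnMDl // divn_small ?addn0.
- by rewrite /i mulnA addnA -mulnDl modnMDl modn_small.
Qed.

Definition gfun (M G C : nat) (cl : nat -> nat -> nat) (i : nat) : nat :=
  (C * ((i %% M) %/ G) + cl (i %/ M) (i %% G))%N.

Lemma eqCmod (C p p' x c : nat) : (x < C)%N -> (c < C)%N ->
  (C * p' + x == C * p + c)%N = (p' == p) && (x == c).
Proof.
move=> xC cC; apply/eqP/andP => [h|[/eqP-> /eqP->]] //.
have C0 : (0 < C)%N by apply: leq_ltn_trans cC.
have := congr1 (fun y => y %/ C)%N h; have := congr1 (fun y => y %% C)%N h.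
rewrite ![(C * _)%N]mulnC !modnMDl !modn_small // => ->.
by rewrite !divnMDl // !divn_small // !addn0 => ->.
Qed.

Lemma nmod_lt (m : nat) {d : nat} : (0 < d)%N -> (m %% d < d)%N.
Proof. by rewrite ltn_mod. Qed.

Lemma lt_pGr (t G p r : nat) : (p < t)%N -> (r < G)%N -> (p * G + r < t * G)%N.
Proof.
move=> pt rG; apply: (@leq_trans (p.+1 * G)); first by rewrite mulSn addnC ltn_add2r.
by rewrite leq_mul2r pt orbT.
Qed.

Lemma generic (t G C : nat) (vs : seq rat) (cl : nat -> nat -> nat) :
  (0 < G)%N -> (0 < t)%N -> (0 < size vs)%N ->
  (forall B, 0 <= vs`_B) ->
  (forall B r, (r < G)%N -> (cl B r < C)%N) ->
  (forall c, (c < C)%N -> exists rl, [/\ (rl < G)%N, cl (size vs).-1 rl = c,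
      (forall r, (r < G)%N -> cl (size vs).-1 r = c -> (r <= rl)%N) &
      \sum_(0 <= B < size vs) \sum_(0 <= r < G) (if cl B r == c then vs`_B else 0)
        - vs`_(size vs).-1 < 1]) ->
  oe_packable (flatten (map (nseq (t * G)) vs)) (C * t).
Proof.
move=> G0 t0 n0 vpos clC Hc.
have M0 : (0 < t * G)%N by rewrite muln_gt0 t0 G0.
apply: (@crit _ _ (gfun (t * G) G C cl)).
- by move=> x xs; rewrite -(nth_index 0 xs) nth_flat.
- move=> i _; rewrite /gfun.
  have pt : ((i %% (t * G)) %/ G < t)%N by rewrite ltn_divLR // nmod_lt.
  have := clC (i %/ (t * G))%N (i %% G)%N (nmod_lt _ G0) => h.
  apply: (@leq_trans (C * ((i %% (t * G)) %/ G).+1)); first by rewrite mulnS addnC ltn_add2r.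
  by rewrite leq_mul2l pt orbT.
move=> b bCt.
have C0 : (0 < C)%N by case: C bCt {clC Hc} => //; rewrite mul0n.
pose p := (b %/ C)%N; pose c := (b %% C)%N.
have eb : b = (C * p + c)%N by rewrite /p /c mulnC -divn_eq.
have cC : (c < C)%N by rewrite nmod_lt.
have pt : (p < t)%N by rewrite ltn_divLR // mulnC.
have [rl [rlG clrl rlmax Hsum]] := Hc c cC.
exists ((size vs).-1 * (t * G) + (p * G + rl))%N.
have [d1 d2 d3 d4] := decomp (size vs).-1 pt rlG.
split.
- rewrite size_flat -{2}(prednK n0) mulSn [X in (_ < X)%N]addnC ltn_add2l; exact: lt_pGr.
- by rewrite /gfun d2 d3 d1 d4 clrl eb.
- move=> j; rewrite size_flat => jn gj.
  pose B := (j %/ (t * G))%N; pose p' := ((j %% (t * G)) %/ G)%N; pose r' := ((j %% (t * G)) %% G)%N.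
  have p't : (p' < t)%N by rewrite ltn_divLR // nmod_lt.
  have r'G : (r' < G)%N by rewrite nmod_lt.
  have ej : j = (B * (t * G) + (p' * G + r'))%N by rewrite /B /p' /r' -!divn_eq.
  have Bn : (B < size vs)%N by rewrite ltn_divLR.
  have [e1 e2 e3 e4] := decomp B p't r'G.
  move: gj; rewrite /gfun ej e2 e3 e1 e4 eb => /eqP; rewrite eqCmod ?clC // => /andP[/eqP pp /eqP cc].
  clearbody B p' r' p c; clear e1 e2 e3 e4 d1 d2 d3 d4 Hsum Hc ej.
  rewrite pp.
  have [Blt|Beq] : (B < (size vs).-1)%N \/ B = (size vs).-1 by lia.
  + have h1 : (B.+1 * (t * G) <= (size vs).-1 * (t * G))%N by rewrite leq_mul2r Blt orbT.
    have h2 := lt_pGr _ _ _ _ pt r'G.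
    rewrite mulSn in h1; lia.
  + have := rlmax _ r'G; rewrite -Beq => /(_ cc) h; rewrite Beq; lia.
rewrite size_flat sum_split nth_flat // d1.
apply: le_lt_trans Hsum; rewrite lerD2r le_eqVlt; apply/orP; left; apply/eqP.
apply: eq_bigr => B _; rewrite sum_split.
rewrite (@eq_big_nat _ _ _ 0 t _ (fun p' => if p' == p then
    \sum_(0 <= r < G) (if cl B r == c then vs`_B else 0) else 0)).
  by rewrite -big_mkcond big_nat1_eq /= pt.
move=> p' /andP[_ hp']; case: eqP => [->|ne].
  apply: eq_big_nat => r /andP[_ hr].
  have [e1 e2 e3 e4] := decomp B pt hr.
  by rewrite /gfun e2 e3 e1 e4 eb eqCmod ?clC // eqxx /= nth_flat // e1.
rewrite big_nat_cond; apply: big1 => r /andP[/andP[_ hr] _]; have [e1 e2 e3 e4] := decomp B hp' hr.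
by rewrite /gfun e2 e3 e1 e4 eb eqCmod ?clC //; case: eqP.
Qed.

Definition vs1 (N : nat) : seq rat := [seq ((7 : rat) ^+ (N - k))^-1 | k <- iota 0 N].
Definition S (N : nat) : rat := \sum_(0 <= B < N) ((7 : rat) ^+ (N - B))^-1.

Lemma size_vs1 N : size (vs1 N) = N.
Proof. by rewrite size_map size_iota. Qed.

Lemma nth_vs1 N B : (B < N)%N -> (vs1 N)`_B = ((7 : rat) ^+ (N - B))^-1.
Proof. by move=> BN; rewrite (nth_map 0%N) ?size_iota // nth_iota. Qed.

Lemma S_bounds N : 0 <= S N /\ S N < 6^-1.
Proof.
elim: N => [|N [IH0 IH1]]; first by rewrite /S big_geq //; split => //.
have -> : S N.+1 = (S N + 1) / 7.
  rewrite /S big_nat_recr //= subSnn expr1 mulrDl div1r; congr (_ + _).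
  rewrite big_distrl /=; apply: eq_big_nat => B /andP[_ BN].
  by rewrite subSn ?(ltnW BN) // exprSr invfM.
split; first by apply: divr_ge0 => //; apply: addr_ge0.
rewrite ltr_pdivrMr //; lra.
Qed.

Lemma flatI1 M N : I1 M N = flatten (map (nseq M) (vs1 N)).
Proof. by rewrite /I1 /vs1 -map_comp. Qed.

Lemma shift_sum (N k : nat) (F : nat -> rat) :
  \sum_(N <= B < N + k) F B = \sum_(0 <= i < k) F (i + N)%N.
Proof. by rewrite -{1}[N]add0n big_addn addKn. Qed.

Definition cntR (G : nat) (f : nat -> nat) (c : nat) : rat :=
  \sum_(0 <= r < G) (if f r == c then 1 else 0).

Lemma inst (N t G C : nat) (tl : seq rat) (f : nat -> nat) (h : nat -> nat -> nat) :
  (0 < G)%N -> (0 < t)%N -> (0 < size tl)%N ->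
  (forall r, (r < G)%N -> (f r < C)%N) ->
  (forall i r, (r < G)%N -> (h i r < C)%N) ->
  (forall i, 0 <= tl`_i) ->
  (forall c, (c < C)%N -> exists rl, [/\ (rl < G)%N, h (size tl).-1 rl = c,
     (forall r, (r < G)%N -> h (size tl).-1 r = c -> (r <= rl)%N),
     0 < cntR G f c &
     cntR G f c / 6 + \sum_(0 <= i < size tl) \sum_(0 <= r < G)
        (if h i r == c then tl`_i else 0) - tl`_(size tl).-1 <= 1]) ->
  oe_packable (flatten (map (nseq (t * G)) (vs1 N ++ tl))) (C * t).
Proof.
move=> G0 t0 tl0 fC hC tlpos H.
apply: (@generic t G C _ (fun B r => if (B < N)%N then f r else h (B - N)%N r)) => //.
- by rewrite size_cat addn_gt0 tl0 orbT.
- move=> B; rewrite nth_cat size_vs1; case: ltnP => BN //.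
  by rewrite nth_vs1 // invr_ge0 exprn_ge0.
- by move=> B r rG; case: ifP => _; auto.
move=> c cC; have [rl [rlG hrl rlmax cpos Hs]] := H c cC; exists rl.
have e1 : (size (vs1 N ++ tl)).-1 = (N + (size tl).-1)%N.
  by rewrite size_cat size_vs1 -(prednK tl0) addnS.
have e2 : (N + (size tl).-1 < N)%N = false by rewrite ltnNge leq_addr.
rewrite e1 e2 addKn; split => //.
rewrite size_cat size_vs1 (big_cat_nat (n := N)) ?leq_addr //=.
rewrite nth_cat size_vs1 e2 addKn.
have -> : \sum_(0 <= B < N) \sum_(0 <= r < G)
    (if (if (B < N)%N then f r else h (B - N)%N r) == c then (vs1 N ++ tl)`_B else 0)
    = cntR G f c * S N.
  rewrite /S mulr_sumr; apply: eq_big_nat => B /andP[_ BN].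
  rewrite BN nth_cat size_vs1 BN nth_vs1 // /cntR big_distrl /=.
  by apply: eq_bigr => r _; case: ifP; rewrite ?mul1r ?mul0r.
rewrite shift_sum.
have -> : \sum_(0 <= i < size tl) \sum_(0 <= r < G)
    (if (if (i + N < N)%N then f r else h (i + N - N)%N r) == c then (vs1 N ++ tl)`_(i + N) else 0)
    = \sum_(0 <= i < size tl) \sum_(0 <= r < G) (if h i r == c then tl`_i else 0).
  apply: eq_bigr => i _; have e3 : (i + N < N)%N = false by rewrite ltnNge leq_addl.
  by rewrite e3 addnK nth_cat size_vs1 e3 addnK.
have [S0 S1] := S_bounds N.
have : cntR G f c * S N < cntR G f c / 6 by rewrite ltr_pM2l.
lra.
Qed.

Ltac cnt := rewrite /cntR /index_iota /=; rewrite ?(big_cons, big_nil) /=.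

Lemma tlpos1 (a : seq rat) : all (fun x => 0 <= x) a -> forall i, 0 <= a`_i.
Proof.
move=> /allP H i; case: (ltnP i (size a)) => ia; first by apply: H; exact: mem_nth.
by rewrite nth_default.
Qed.

Lemma J3_pack t N : (0 < t)%N ->
  oe_packable (J3 (t * 8) N) (3 * t).
Proof.
move=> t0.
have -> : J3 (t * 8) N = flatten (map (nseq (t * 8)) (vs1 N ++ [:: 3^-1])).
  by rewrite /J3 flatI1 map_cat flatten_cat /= cats0.
apply: (@inst N t 8 3 _ (fun r => if (r < 2)%N then 0 else if (r < 4)%N then 1 else 2)%N
          (fun _ r => if (r < 3)%N then 0 else if (r < 6)%N then 1 else 2)%N) => //.
- by move=> r _; case: ifP => //; case: ifP.
- by move=> _ r _; case: ifP => //; case: ifP.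
- by apply: tlpos1.
case=> [|[|[|c]]] // _.
- exists 2%N; split => //.
  + by move=> r _ /=; case: (ltnP r 3) => //; case: (ltnP r 6).
  + by cnt.
  + cnt; lra.
- exists 5%N; split => //.
  + by move=> r _ /=; case: (ltnP r 3) => //; case: (ltnP r 6) => // *; lia.
  + by cnt.
  + cnt; lra.
- exists 7%N; split => //.
  + by cnt.
  + cnt; lra.
Qed.

Lemma J2_pack t N : (0 < t)%N ->
  oe_packable (J2 (t * 3) N) (2 * t).
Proof.
move=> t0.
have -> : J2 (t * 3) N = flatten (map (nseq (t * 3)) (vs1 N ++ [:: 3^-1; 2^-1])).
  by rewrite /J2 /J3 flatI1 map_cat flatten_cat /= cats0 catA.
apply: (@inst N t 3 2 _ (fun r => if (r < 2)%N then 0 else 1)%N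
          (fun i r => if i == 0%N then (if (r < 2)%N then 0 else 1) else (if (r < 1)%N then 0 else 1))%N) => //.
- by move=> r _; case: ifP.
- by move=> i r _; case: ifP => _; case: ifP.
- by apply: tlpos1.
case=> [|[|c]] // _.
- exists 0%N; split => //.
  + by move=> r _ /=; case: (ltnP r 1) => // *; lia.
  + by cnt.
  + cnt; lra.
- exists 2%N; split => //.
  + by cnt.
  + cnt; lra.
Qed.

Lemma J22_pack M N : (0 < M)%N ->
  oe_packable (J22 M N) M.
Proof.
move=> M0.
have -> : J22 M N = flatten (map (nseq (M * 1)) (vs1 N ++ [:: 3^-1; 2^-1; 2^-1])).
  by rewrite muln1 /J22 /J3 flatI1 map_cat flatten_cat /= cats0 mul2n -addnn nseqD -!catA.
rewrite -[X in oe_packable _ X]mul1n.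
apply: (@inst N M 1 1 _ (fun r => 0)%N (fun i r => 0)%N) => //.
- by apply: tlpos1.
case=> [|c] // _.
exists 0%N; split => //.
  + by cnt.
  + cnt; lra.
Qed.

Lemma J1_pack M N : (0 < M)%N ->
  oe_packable (J1 M N) M.
Proof.
move=> M0.
have -> : J1 M N = flatten (map (nseq (M * 1)) (vs1 N ++ [:: 3^-1; 2^-1; 1])).
  by rewrite muln1 /J1 /J2 /J3 flatI1 map_cat flatten_cat /= cats0 -!catA.
rewrite -[X in oe_packable _ X]mul1n.
apply: (@inst N M 1 1 _ (fun r => 0)%N (fun i r => 0)%N) => //.
- by apply: tlpos1.
case=> [|c] // _.
exists 0%N; split => //.
  + by cnt.
  + cnt; lra.
Qed.

Theorem mainTheorem11 (M N : nat) :
  (3 <= M)%N -> (3 <= N)%N -> ((7 ^ N.+1)`! %| M)%N ->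
  [/\ (OPT (J3 M N))%:R <= (3 * M)%:R / 8 :> rat,
      (OPT (J2 M N))%:R <= (2 * M)%:R / 3 :> rat,
      (OPT (J22 M N) <= M)%N
    & (OPT (J1 M N) <= M)%N].
Proof.
move=> M3 N3 dM.
have M0 : (0 < M)%N by apply: leq_trans M3.
have big : (8 <= 7 ^ N.+1)%N.
  apply: (@leq_trans (7 ^ 2)) => //; apply: leq_pexp2l => //; lia.
have d8 : (8 %| M)%N by apply: dvdn_trans dM; apply: dvdn_fact; rewrite big.
have d3 : (3 %| M)%N by apply: dvdn_trans dM; apply: dvdn_fact; rewrite (leq_trans _ big).
split; last 2 first.
- exact/OPT_le/J22_pack.
- exact/OPT_le/J1_pack.
- have e : M = (M %/ 8 * 8)%N by rewrite divnK.
  have t0 : (0 < M %/ 8)%N by rewrite divn_gt0 // dvdn_leq.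
  rewrite e mulnA natrM mulfK // ler_nat; apply/OPT_le/J3_pack => //.
- have e : M = (M %/ 3 * 3)%N by rewrite divnK.
  have t0 : (0 < M %/ 3)%N by rewrite divn_gt0 // dvdn_leq.
  rewrite e mulnA natrM mulfK // ler_nat; apply/OPT_le/J2_pack => //.
Qed.
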